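(* With the notation $u$, $u_1=\sqrt{1-u^2}$, $u_2=\sqrt{1-\rho_1u^2}$, $P_1=(au,bu_1)$ and the 3-periodic $P_1P_2P_3$ (fixed orientation) as described, let $s_1=|P_2P_3|$, $s_2=|P_3P_1|$, $s_3=|P_1P_2|$. Then there exist polynomials $h_0,h_1,h_2,h_3\in\mathbb{R}[u]$ (coefficients depending only on $a,b$), with $h_1\not\equiv0$, and a sign $\varepsilon\in\{\pm1\}$, such that for all $u\in(-1,1)$: $$h_1(u)\,s_1^2=h_0(u),\qquad h_1(u)\,s_2^2=h_3(u)-\varepsilon\,h_2(u)\,u_1u_2,\qquad h_1(u)\,s_3^2=h_3(u)+\varepsilon\,h_2(u)\,u_1u_2.$$ In particular $s_1,s_2,s_3$ satisfy nonzero polynomial equations $g_1(s_1,u)=0$, $g_2(s_2,u,u_1,u_2)=0$, $g_3(s_3,u,u_1,u_2)=0$.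
   Context: Fix real numbers $a>b>0$, let $E$ be the ellipse $x^2/a^2+y^2/b^2=1$, $c^2=a^2-b^2$, $\delta=\sqrt{a^4-a^2b^2+b^4}$ and $\rho_1=\dfrac{c^2(b^2+\delta)^2}{a^6}$. A 3-periodic is a non-degenerate triangle $P_1P_2P_3$ with all vertices on $E$ such that at each vertex $P_j$ the normal line to $E$ at $P_j$ bisects the interior angle of the triangle at $P_j$. Every point of $E$ is a vertex of exactly one 3-periodic. For $u\in(-1,1)$, $P_1=(au,b\sqrt{1-u^2})$ and $P_2,P_3$ are the other vertices of the 3-periodic through $P_1$, labelled in one fixed orientation for all $u$. *)

(* Defs.v *)
From Stdlib Require Import Reals List.
Open Scope R_scope.

Definition pt := (R * R)%type.

Fixpoint peval (p : list R) (x : R) : R :=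
  match p with
  | nil => 0
  | c :: q => c + x * peval q x
  end.

Definition on_ellipse (a b : R) (P : pt) : Prop :=
  (fst P)^2 / a^2 + (snd P)^2 / b^2 = 1.

Definition edist (P Q : pt) : R :=
  sqrt ((fst Q - fst P)^2 + (snd Q - snd P)^2).

(* signed double area of triangle P1 P2 P3 (positive iff counterclockwise) *)
Definition orient (P1 P2 P3 : pt) : R :=
  (fst P2 - fst P1) * (snd P3 - snd P1) - (snd P2 - snd P1) * (fst P3 - fst P1).

(* The normal line to E at P (direction (x/a^2, y/b^2)) contains the interior
   angle bisector of angle Q P R, whose direction is (Q-P)/|PQ| + (R-P)/|PR|. *)
Definition normal_bisects (a b : R) (P Q S : pt) : Prop :=
  let nx := fst P / a^2 in
  let ny := snd P / b^2 in
  let wx := (fst Q - fst P) / edist P Q + (fst S - fst P) / edist P S in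
  let wy := (snd Q - snd P) / edist P Q + (snd S - snd P) / edist P S in
  nx * wy - ny * wx = 0.

Definition three_periodic (a b : R) (P1 P2 P3 : pt) : Prop :=
  on_ellipse a b P1 /\ on_ellipse a b P2 /\ on_ellipse a b P3 /\
  orient P1 P2 P3 <> 0 /\
  normal_bisects a b P1 P2 P3 /\
  normal_bisects a b P2 P3 P1 /\
  normal_bisects a b P3 P1 P2.

Definition delta (a b : R) : R := sqrt (a^4 - a^2 * b^2 + b^4).
Definition rho1 (a b : R) : R :=
  (a^2 - b^2) * (b^2 + delta a b)^2 / a^6.

Definition P1_of (a b u : R) : pt := (a * u, b * sqrt (1 - u^2)).

(* Main.v *)
Require Import Defs.
From Stdlib Require Import Reals List Lra Psatz.
Open Scope R_scope.
Import ListNotations.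


Lemma vec_lemma (nx ny e1x e1y e2x e2y: R): nx^2+ny^2>0 -> e1x^2+e1y^2=1 -> e2x^2+e2y^2=1 ->
  nx*(e1y+e2y) - ny*(e1x+e2x) = 0 -> e1x*e2y - e1y*e2x <> 0 ->
  nx*e1x+ny*e1y = nx*e2x+ny*e2y.
Proof.
  intros Hn H1 H2 Hc Ho.
  set (p1 := nx*e1x+ny*e1y). set (p2 := nx*e2x+ny*e2y).
  assert (L1 : p1^2 + (nx*e1y-ny*e1x)^2 = (nx^2+ny^2)*(e1x^2+e1y^2)) by (unfold p1; ring).
  assert (L2 : p2^2 + (nx*e2y-ny*e2x)^2 = (nx^2+ny^2)*(e2x^2+e2y^2)) by (unfold p2; ring).
  assert (Hsq : p1^2 = p2^2).
  { assert (nx*e2y-ny*e2x = -(nx*e1y-ny*e1x)) by lra.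
    rewrite H in L2. rewrite H1 in L1. rewrite H2 in L2. nra. }
  assert (Hf : (p1-p2)*(p1+p2) = 0) by (rewrite <- (Rminus_diag_eq _ _ Hsq); ring).
  destruct (Rmult_integral _ _ Hf) as [E|E]; [lra|].
  exfalso. apply Ho.
  assert (S : (nx^2+ny^2)*((e1x+e2x)^2+(e1y+e2y)^2) = (p1+p2)^2 + (nx*(e1y+e2y) - ny*(e1x+e2x))^2) by (unfold p1,p2; ring).
  rewrite E, Hc in S.
  assert (Z : (e1x+e2x)^2+(e1y+e2y)^2 = 0).
  { apply (Rmult_eq_reg_l (nx^2+ny^2)); [|lra]. lra. }
  assert (e1x+e2x = 0) by nra. assert (e1y+e2y=0) by nra.
  replace e2x with (-e1x) by lra. replace e2y with (-e1y) by lra. ring.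
Qed.


Lemma edist_pos (px py qx qy : R) : (qx-px)^2+(qy-py)^2 > 0 ->
  0 < edist (px,py) (qx,qy) /\ edist (px,py) (qx,qy) ^2 = (qx-px)^2+(qy-py)^2.
Proof.
  intro H. unfold edist; cbn [fst snd]. split. apply sqrt_lt_R0; lra.
  rewrite pow2_sqrt; lra.
Qed.

Lemma refl_lemma a b px py qx qy sx sy : 0<a -> 0<b -> px^2/a^2+py^2/b^2 = 1 ->
  orient (px,py) (qx,qy) (sx,sy) <> 0 -> normal_bisects a b (px,py) (qx,qy) (sx,sy) ->
  (px*qx/a^2+py*qy/b^2-1)/edist (px,py) (qx,qy) = (px*sx/a^2+py*sy/b^2-1)/edist (px,py) (sx,sy).
Proof.
  intros Ha Hb He Hor Hn. unfold normal_bisects, orient in *; cbn [fst snd] in *.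
  assert (HQ : (qx-px)^2+(qy-py)^2 > 0).
  { destruct (Req_dec qx px); destruct (Req_dec qy py); first [nra | (exfalso; apply Hor; subst; ring)]. }
  assert (HS : (sx-px)^2+(sy-py)^2 > 0).
  { destruct (Req_dec sx px); destruct (Req_dec sy py); first [nra | (exfalso; apply Hor; subst; ring)]. }
  destruct (edist_pos px py qx qy HQ) as [dQp dQ2].
  destruct (edist_pos px py sx sy HS) as [dSp dS2].
  set (dQ := edist (px,py) (qx,qy)) in *. set (dS := edist (px,py) (sx,sy)) in *.
  assert (a^2 <> 0) by (apply pow_nonzero; lra).
  assert (b^2 <> 0) by (apply pow_nonzero; lra).
  replace ((px*qx/a^2+py*qy/b^2-1)/dQ) with
     ((px/a^2)*((qx-px)/dQ) + (py/b^2)*((qy-py)/dQ)).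
  2:{ rewrite <- He. field. lra. }
  replace ((px*sx/a^2+py*sy/b^2-1)/dS) with
     ((px/a^2)*((sx-px)/dS) + (py/b^2)*((sy-py)/dS)).
  2:{ rewrite <- He. field. lra. }
  apply vec_lemma.
  - destruct (Req_dec (px/a^2) 0) as [Z1|Z1].
    + destruct (Req_dec (py/b^2) 0) as [Z2|Z2].
      * exfalso. assert (px = 0). { replace px with (px/a^2*a^2) by (field; lra). rewrite Z1; ring. }
        assert (py = 0). { replace py with (py/b^2*b^2) by (field; lra). rewrite Z2; ring. }
        subst. unfold Rdiv in He. lra.
      * pose proof (Rlt_0_sqr _ Z2). unfold Rsqr in *. nra.
    + pose proof (Rlt_0_sqr _ Z1). unfold Rsqr in *. nra.
  - replace (((qx - px) / dQ) ^ 2 + ((qy - py) / dQ) ^ 2) with (((qx-px)^2+(qy-py)^2)/dQ^2) by (field; lra).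
    rewrite <- dQ2; field; lra.
  - replace (((sx - px) / dS) ^ 2 + ((sy - py) / dS) ^ 2) with (((sx-px)^2+(sy-py)^2)/dS^2) by (field; lra).
    rewrite <- dS2; field; lra.
  - exact Hn.
  - intro Hc. apply Hor.
    replace ((qx - px) * (sy - py) - (qy - py) * (sx - px)) with
      (dQ*dS*((qx - px) / dQ * ((sy - py) / dS) - (qy - py) / dQ * ((sx - px) / dS))) by (field; lra).
    rewrite Hc. ring.
Qed.

Definition cc0 a b m := m*(a^2+b^2)-1.
Definition cc1 a b m := 1 + m*(b^2-a^2).
Definition cc2 a b m := 1 + m*(a^2-b^2).

Fixpoint padd (p q : list R) : list R :=
  match p, q with
  | nil, _ => q
  | _, nil => p
  | x :: p', y :: q' => (x + y) :: padd p' q'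
  end.
Definition pscale (c : R) (p : list R) : list R := map (fun x => c * x) p.
Fixpoint pmul (p q : list R) : list R :=
  match p with
  | nil => nil
  | x :: p' => padd (pscale x q) (0 :: pmul p' q)
  end.
Lemma peval_add p q x : peval (padd p q) x = peval p x + peval q x.
Proof. revert q; induction p as [|c p IH]; intros q; destruct q as [|d q]; simpl; try ring.
  rewrite IH. ring. Qed.
Lemma peval_scale c p x : peval (pscale c p) x = c * peval p x.
Proof. induction p as [|d p IH]; simpl; [ring|]. rewrite IH. ring. Qed.
Lemma peval_mul p q x : peval (pmul p q) x = peval p x * peval q x.
Proof. induction p as [|c p IH]; simpl; [ring|]. rewrite peval_add, peval_scale. simpl. rewrite IH. ring. Qed.

Definition m0 a b := (2*delta a b - a^2 - b^2)/(a^2-b^2)^2.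
Definition k0 a b := cc0 a b (m0 a b).
Definition k1 a b := cc1 a b (m0 a b).
Definition k2 a b := cc2 a b (m0 a b).
Definition Kc a b := sqrt (k2 a b^2 - k0 a b^2).

Definition Nl a b := padd (pscale (k1 a b^2) [0;0;1]) (pscale (k2 a b^2) [1;0;-1]).
Definition Dl a b := padd (Nl a b) [-(k0 a b^2)].
Definition Ph1 a b := pmul (Nl a b) (Nl a b).
Definition Ph0 a b := pscale 4 (pmul (Dl a b) (padd (pscale (a^2*k2 a b^2) [1;0;-1]) (pscale (b^2*k1 a b^2) [0;0;1]))).
Definition Al a b := padd [k0 a b*k1 a b] (Nl a b).
Definition Bl a b := padd [k0 a b*k2 a b] (Nl a b).
Definition Ph2 a b := pscale (2*Kc a b) (pmul [0;1] (padd (pscale (a^2*k2 a b) (Al a b)) (pscale (-(b^2*k1 a b)) (Bl a b)))).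
Definition Ph3 a b := padd (pscale (a^2) (padd (pmul [0;0;1] (pmul (Al a b) (Al a b))) (pmul (pscale (k2 a b^2) [1;0;-1]) (Dl a b))))
   (pscale (b^2) (padd (pmul [1;0;-1] (pmul (Bl a b) (Bl a b))) (pmul (pscale (k1 a b^2) [0;0;1]) (Dl a b)))).

Ltac pev := repeat (rewrite ?peval_add, ?peval_scale, ?peval_mul); cbn [peval].

Section Ev.
Variables a b u : R.
Let c0 := k0 a b. Let c1 := k1 a b. Let c2 := k2 a b.
Let N := c1^2*u^2+c2^2*(1-u^2).
Let D := N - c0^2.
Lemma ev_N : peval (Nl a b) u = N. Proof. unfold Nl, N, c1, c2. pev. ring. Qed.
Lemma ev_D : peval (Dl a b) u = D. Proof. unfold Dl. pev. rewrite ev_N. unfold D, c0. ring. Qed.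
Lemma ev_Ph1 : peval (Ph1 a b) u = N^2. Proof. unfold Ph1. pev. rewrite ev_N. ring. Qed.
Lemma ev_Ph0 : peval (Ph0 a b) u = 4*D*(a^2*c2^2*(1-u^2)+b^2*c1^2*u^2).
Proof. unfold Ph0. pev. rewrite ev_D. unfold c1,c2. ring. Qed.
Lemma ev_Ph2 : peval (Ph2 a b) u = 2*Kc a b*(u*(a^2*c2*(c0*c1+N) - b^2*c1*(c0*c2+N))).
Proof. unfold Ph2, Al, Bl. pev. rewrite ev_N. unfold c0,c1,c2. ring. Qed.
Lemma ev_Ph3 : peval (Ph3 a b) u = a^2*(u^2*(c0*c1+N)^2 + c2^2*(1-u^2)*D) + b^2*((1-u^2)*(c0*c2+N)^2 + c1^2*u^2*D).
Proof. unfold Ph3, Al, Bl. pev. rewrite ev_N, ev_D. unfold c0,c1,c2. ring. Qed.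
End Ev.

Lemma csq_pos a b : 0 < b -> b < a -> 0 < (a^2-b^2)^2.
Proof. intros. assert (0 < a^2-b^2) by nra. apply pow_lt; lra. Qed.

Lemma delta_sq a b : delta a b ^2 = a^4 - a^2*b^2 + b^4.
Proof. unfold delta. rewrite pow2_sqrt; [ring|]. nra. Qed.
Lemma delta_gt a b : 0 < b -> b < a -> b^2 < delta a b.
Proof. intros. pose proof (delta_sq a b) as Hd. assert (0 <= delta a b) by (unfold delta; apply sqrt_pos).
  assert (0 < a^2*(a^2-b^2)) by (apply Rmult_lt_0_compat; nra).
  assert (b^4 < delta a b^2) by (rewrite Hd; nra). nra. Qed.
Lemma m0_pos a b : 0 < b -> b < a -> 0 < m0 a b.
Proof. intros. unfold m0. pose proof (delta_sq a b) as Hd. pose proof (delta_gt a b H H0).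
  pose proof (csq_pos a b ltac:(assumption) ltac:(assumption)).
  assert (a^2+b^2 < 2*delta a b).
  { assert ((a^2+b^2)^2 < (2*delta a b)^2) by (replace ((2*delta a b)^2) with (4*delta a b^2) by ring; rewrite Hd; nra). nra. }
  apply Rdiv_lt_0_compat; lra. Qed.
Lemma m_eq a b m : 0 < b -> b < a -> 0 < m -> (a^2-b^2)^2*m^2+2*(a^2+b^2)*m-3 = 0 -> m = m0 a b.
Proof. intros Hb Hab Hm HP. pose proof (delta_sq a b) as Hd. pose proof (delta_gt a b Hb Hab).
  pose proof (csq_pos a b Hb Hab) as Hc. unfold m0.
  assert (F : ((a^2-b^2)^2*m - (2*delta a b - a^2 - b^2)) * ((a^2-b^2)^2*m + (2*delta a b + a^2 + b^2)) = 0).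
  { replace (((a^2-b^2)^2*m - (2*delta a b - a^2 - b^2)) * ((a^2-b^2)^2*m + (2*delta a b + a^2 + b^2)))
      with ((a^2-b^2)^2*((a^2-b^2)^2*m^2+2*(a^2+b^2)*m) - 4*delta a b^2 + (a^2+b^2)^2) by ring.
    rewrite Hd. replace ((a^2-b^2)^2*m^2+2*(a^2+b^2)*m) with 3 by lra. ring. }
  apply Rmult_integral in F. destruct F as [F|F].
  - assert (Hne : a^2-b^2 <> 0) by nra. replace (2*delta a b - a^2 - b^2) with ((a^2-b^2)^2*m) by lra. field. assumption.
  
  - exfalso. assert (0 < (a^2-b^2)^2*m) by nra. nra.
Qed.
Lemma one_m0 a b : 0 < b -> b < a -> (1 - m0 a b * b^2) = (delta a b - b^2)^2/(a^2-b^2)^2.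
Proof. intros. pose proof (csq_pos a b ltac:(assumption) ltac:(assumption)). assert (Hne : a^2-b^2 <> 0) by nra. unfold m0. field_simplify_eq; [|assumption].
  replace ((delta a b - b^2)^2) with (delta a b^2 - 2*delta a b*b^2 + b^4) by ring. rewrite delta_sq. ring. Qed.
Lemma K2_id a b m : cc2 a b m ^2 - cc0 a b m ^2 = 4*m*a^2*(1-m*b^2).
Proof. unfold cc0, cc2. ring. Qed.
Lemma K2_pos a b : 0 < b -> b < a -> 0 < k2 a b^2 - k0 a b^2.
Proof. intros. unfold k2, k0. rewrite K2_id, one_m0 by auto. pose proof (m0_pos a b H H0). pose proof (delta_gt a b H H0).
  pose proof (csq_pos a b ltac:(assumption) ltac:(assumption)). assert (0 < (delta a b - b^2)^2) by nra.
  assert (0 < (delta a b - b ^ 2) ^ 2 / (a ^ 2 - b ^ 2) ^ 2) by (apply Rdiv_lt_0_compat; lra).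
  assert (0 < a^2) by nra. assert (0 < m0 a b * a^2) by nra. nra. Qed.
Lemma rho_id a b : 0 < b -> b < a -> rho1 a b * (k2 a b^2 - k0 a b^2) = k2 a b^2 - k1 a b^2.
Proof. intros. unfold k2, k0, k1. rewrite K2_id, one_m0 by auto.
  replace (cc2 a b (m0 a b) ^ 2 - cc1 a b (m0 a b) ^ 2) with (4*m0 a b*(a^2-b^2)) by (unfold cc1, cc2; ring).
  unfold rho1. assert (0 < (a^2-b^2)) by nra. assert (0 < a^2) by nra.
  replace ((a ^ 2 - b ^ 2) * (b ^ 2 + delta a b) ^ 2 / a ^ 6 * (4 * m0 a b * a ^ 2 * ((delta a b - b ^ 2) ^ 2 / (a ^ 2 - b ^ 2) ^ 2)))
   with (4*m0 a b * ((delta a b^2 - b^4)^2) / (a^4*(a^2-b^2))) by (field; lra).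
  rewrite delta_sq. field. lra. Qed.

Lemma E_id a b m u : let c0 := cc0 a b m in let c1 := cc1 a b m in let c2 := cc2 a b m in
 c0*(c1^2*u^2+c2^2*(1-u^2)) + c1*(c0^2-c2^2*(1-u^2)) + c2*(c0^2-c1^2*u^2) = 2*((a^2-b^2)^2*m^2+2*(a^2+b^2)*m-3)*m*(b^2*u^2+a^2*(1-u^2)).
Proof. intros; unfold c0,c1,c2,cc0,cc1,cc2. ring. Qed.

Lemma core1 a b u u1 X2 Y2 X3 Y3 m :
  0 < b -> b < a -> 0 < u1 -> u1^2 = 1-u^2 -> X2^2+Y2^2=1 -> X3^2+Y3^2=1 -> 0 < m ->
  cc0 a b m + cc1 a b m * (u*X2) + cc2 a b m * (u1*Y2) = 0 ->
  cc0 a b m + cc1 a b m * (u*X3) + cc2 a b m * (u1*Y3) = 0 ->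
  cc0 a b m + cc1 a b m * (X2*X3) + cc2 a b m * (Y2*Y3) = 0 ->
  (X3-X2)^2+(Y3-Y2)^2 > 0 ->
  (a^2-b^2)^2*m^2+2*(a^2+b^2)*m-3 = 0 /\
  let N := (cc1 a b m*u)^2 + (cc2 a b m * u1)^2 in
  N*(X2+X3) = -2*cc0 a b m * cc1 a b m * u /\ N*(X2*X3) = cc0 a b m^2 - (cc2 a b m*u1)^2.
Proof.
  intros Hb Hab Hu1 Hu1s C2 C3 Hm R12 R13 R23 Hd.
  pose proof (E_id a b m u) as EI. cbv zeta in EI.
  set (c0 := cc0 a b m) in *. set (c1 := cc1 a b m) in *. set (c2 := cc2 a b m) in *.
  assert (Hc2 : 0 < c2). { assert (0 < m*(a^2-b^2)) by (apply Rmult_lt_0_compat; nra). unfold c2, cc2; lra. }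
  assert (Hbeta : 0 < c2*u1) by nra.
  set (N := (c1*u)^2 + (c2*u1)^2).
  assert (HN : 0 < N) by (unfold N; nra).
  assert (HX : X2 <> X3).
  { intro E. subst X3. assert (c2*u1*(Y2-Y3) = 0) by lra.
    assert (Y2 = Y3). { apply Rmult_integral in H. destruct H; nra. } subst; nra. }
  assert (q2 : N*X2^2 + 2*c0*c1*u*X2 + c0^2 - (c2*u1)^2 = 0).
  { assert (c2*u1*Y2 = -c0 - c1*u*X2) by lra.
    assert ((c2*u1)^2*(1-X2^2) = (-c0-c1*u*X2)^2) by (rewrite <- H; nra).
    unfold N; nra. }
  assert (q3 : N*X3^2 + 2*c0*c1*u*X3 + c0^2 - (c2*u1)^2 = 0).
  { assert (c2*u1*Y3 = -c0 - c1*u*X3) by lra.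
    assert ((c2*u1)^2*(1-X3^2) = (-c0-c1*u*X3)^2) by (rewrite <- H; nra).
    unfold N; nra. }
  assert (HS : N*(X2+X3) = -2*c0*c1*u).
  { assert ((X2-X3)*(N*(X2+X3) + 2*c0*c1*u) = 0) by nra.
    apply Rmult_integral in H; destruct H as [H|H]. exfalso; apply HX; lra. lra. }
  assert (HP : N*(X2*X3) = c0^2 - (c2*u1)^2) by nra.
  assert (HY : (c2*u1)^2*(Y2*Y3) = (-c0 - c1*u*X2)*(-c0-c1*u*X3)).
  { assert (c2*u1*Y2 = -c0 - c1*u*X2) by lra.
    assert (c2*u1*Y3 = -c0 - c1*u*X3) by lra.
    rewrite <- H, <- H0. ring. }
  split; [|split; assumption].
  assert (BE : (c2*u1)^2 * (c0*N + c1*(c0^2-(c2*u1)^2) + c2*(c0^2-(c1*u)^2)) = 0).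
  { transitivity ((c2*u1)^2*N*(c0 + c1*(X2*X3) + c2*(Y2*Y3))).
    2:{ rewrite R23; ring. }
    replace ((c2 * u1) ^ 2 * N * (c0 + c1 * (X2 * X3) + c2 * (Y2 * Y3))) with
      ((c2*u1)^2*c0*N + c1*(c2*u1)^2*(N*(X2*X3)) + c2*(N*((c2*u1)^2*(Y2*Y3)))) by ring.
    rewrite HY, HP.
    replace (N*((-c0 - c1*u*X2)*(-c0-c1*u*X3))) with (N*c0^2 + c0*c1*u*(N*(X2+X3)) + (c1*u)^2*(N*(X2*X3))) by ring.
    rewrite HS, HP. unfold N. ring. }
  assert (E0 : c0*N + c1*(c0^2-(c2*u1)^2) + c2*(c0^2-(c1*u)^2) = 0).
  { apply Rmult_integral in BE; destruct BE as [H|H]; [nra|exact H]. }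
  assert (E1 : c0*(c1^2*u^2+c2^2*(1-u^2)) + c1*(c0^2-c2^2*(1-u^2)) + c2*(c0^2-c1^2*u^2) = 0).
  { assert (Q : (c2*u1)^2 = c2^2*(1-u^2)) by (rewrite <- Hu1s; ring).
    rewrite <- E0. unfold N. rewrite Q. ring. }
  rewrite E1 in EI.
  assert (0 < m*(b^2*u^2+a^2*(1-u^2))).
  { apply Rmult_lt_0_compat; [lra|]. rewrite <- Hu1s.
    assert (0<u1^2) by nra. assert (0<a^2) by nra. assert (0<=b^2*u^2) by nra. nra. }
  nra.
Qed.

Lemma core2 a b u u1 X2 Y2 X3 Y3 m o :
  0 < b -> b < a -> 0 < u1 -> u1^2 = 1-u^2 -> 0 < m -> o^2 = 1 ->
  cc0 a b m + cc1 a b m * (u*X2) + cc2 a b m * (u1*Y2) = 0 ->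
  cc0 a b m + cc1 a b m * (u*X3) + cc2 a b m * (u1*Y3) = 0 ->
  let N := (cc1 a b m*u)^2 + (cc2 a b m * u1)^2 in
  N*(X2+X3) = -2*cc0 a b m * cc1 a b m * u -> N*(X2*X3) = cc0 a b m^2 - (cc2 a b m*u1)^2 ->
  0 < o*((X2-u)*(Y3-u1) - (Y2-u1)*(X3-u)) ->
  let r := sqrt (N - cc0 a b m ^2) in
  0 <= N - cc0 a b m ^2 /\
  N*X2 = -cc0 a b m*cc1 a b m*u - o*cc2 a b m*u1*r /\
  N*X3 = -cc0 a b m*cc1 a b m*u + o*cc2 a b m*u1*r /\
  N*Y2 = -cc0 a b m*cc2 a b m*u1 + o*cc1 a b m*u*r /\
  N*Y3 = -cc0 a b m*cc2 a b m*u1 - o*cc1 a b m*u*r.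
Proof.
  intros Hb Hab Hu1 Hu1s Hm Ho R12 R13 N HS HP Hor r.
  set (c0 := cc0 a b m) in *. set (c1 := cc1 a b m) in *. set (c2 := cc2 a b m) in *.
  assert (Hc2 : 0 < c2). { assert (0 < m*(a^2-b^2)) by (apply Rmult_lt_0_compat; nra). unfold c2, cc2; lra. }
  assert (Hbeta : 0 < c2*u1) by nra.
  assert (HN : 0 < N) by (unfold N; nra).
  assert (HT : c0 + c1*u^2 + c2*u1^2 = 2*m*(a^2*u1^2+b^2*u^2)).
  { rewrite Hu1s. unfold c0,c1,c2,cc0,cc1,cc2. ring. }
  assert (HTp : 0 < c0 + c1*u^2 + c2*u1^2).
  { rewrite HT. apply Rmult_lt_0_compat; [lra|]. assert (0<u1^2) by nra. assert (0<a^2) by nra. assert (0<=b^2*u^2) by nra. nra. }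
  assert (Hy2 : c2*u1*Y2 = -c0 - c1*u*X2) by lra.
  assert (Hy3 : c2*u1*Y3 = -c0 - c1*u*X3) by lra.
  assert (HC : c2*u1*((X2-u)*(Y3-u1) - (Y2-u1)*(X3-u)) = (X3-X2)*(c0 + c1*u^2 + c2*u1^2)).
  { replace (c2*u1*((X2-u)*(Y3-u1) - (Y2-u1)*(X3-u))) with
      ((X2-u)*(c2*u1*Y3 - c2*u1*u1) - (c2*u1*Y2 - c2*u1*u1)*(X3-u)) by ring.
    rewrite Hy2, Hy3. ring. }
  assert (Hsgn : 0 < o*(X3-X2)).
  { assert (0 < c2*u1*(o*((X2-u)*(Y3-u1) - (Y2-u1)*(X3-u)))) by (apply Rmult_lt_0_compat; lra).
    replace (c2*u1*(o*((X2-u)*(Y3-u1) - (Y2-u1)*(X3-u)))) with (o*(c2*u1*((X2-u)*(Y3-u1) - (Y2-u1)*(X3-u)))) in H by ring.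
    rewrite HC in H. nra. }
  assert (HD2 : (N*(X3-X2))^2 = 4*(c2*u1)^2*(N - c0^2)).
  { replace ((N*(X3-X2))^2) with ((N*(X2+X3))^2 - 4*N*(N*(X2*X3))) by ring.
    rewrite HS, HP. unfold N. ring. }
  assert (HD : 0 <= N - c0^2).
  { pose proof (pow2_ge_0 (N*(X3-X2))) as G. rewrite HD2 in G. assert (0 < 4*(c2*u1)^2) by nra.
    apply (Rmult_le_reg_l (4*(c2*u1)^2)); [lra|]. rewrite Rmult_0_r. exact G. }
  assert (Hr2 : r^2 = N - c0^2) by (unfold r; rewrite pow2_sqrt; lra).
  assert (Hr0 : 0 <= r) by (unfold r; apply sqrt_pos).
  assert (Hdiff : N*o*(X3-X2) = 2*(c2*u1)*r).
  { apply Rsqr_inj.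
    - assert (0 < N*(o*(X3-X2))) by (apply Rmult_lt_0_compat; lra). nra.
    - nra.
    - unfold Rsqr. replace (N * o * (X3 - X2) * (N * o * (X3 - X2))) with (o^2*(N*(X3-X2))^2) by ring.
      rewrite Ho, HD2, <- Hr2. ring. }
  assert (Hdiff2 : N*(X3-X2) = 2*o*(c2*u1)*r).
  { replace (N*(X3-X2)) with (o^2*(N*(X3-X2))) by (rewrite Ho; ring).
    replace (o^2*(N*(X3-X2))) with (o*(N*o*(X3-X2))) by ring. rewrite Hdiff. ring. }
  assert (EX2 : N*X2 = -c0*c1*u - o*c2*u1*r) by nra.
  assert (EX3 : N*X3 = -c0*c1*u + o*c2*u1*r) by nra.
  split; [exact HD|]. split; [exact EX2|]. split; [exact EX3|].
  split.
  - apply (Rmult_eq_reg_l (c2*u1)); [|lra].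
    replace (c2*u1*(N*Y2)) with (N*(c2*u1*Y2)) by ring. rewrite Hy2.
    replace (N*(-c0 - c1*u*X2)) with (-c0*N - c1*u*(N*X2)) by ring. rewrite EX2.
    unfold N. ring.
  - apply (Rmult_eq_reg_l (c2*u1)); [|lra].
    replace (c2*u1*(N*Y3)) with (N*(c2*u1*Y3)) by ring. rewrite Hy3.
    replace (N*(-c0 - c1*u*X3)) with (-c0*N - c1*u*(N*X3)) by ring. rewrite EX3.
    unfold N. ring.
Qed.

Lemma fin3 (a b c0 c1 c2 u u1 r o : R) :
  o^2 = 1 -> u1^2 = 1-u^2 -> r^2 = c1^2*u^2+c2^2*(1-u^2) - c0^2 ->
  let N := c1^2*u^2+c2^2*(1-u^2) in
  let D := N - c0^2 in
  a^2*((-c0*c1*u - o*c2*u1*r) - ((c1*u)^2+(c2*u1)^2)*u)^2 + b^2*((-c0*c2*u1 + o*c1*u*r) - ((c1*u)^2+(c2*u1)^2)*u1)^2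
  = (a^2*(u^2*(c0*c1+N)^2 + c2^2*(1-u^2)*D) + b^2*((1-u^2)*(c0*c2+N)^2 + c1^2*u^2*D))
    + o*(2*u*(a^2*c2*(c0*c1+N) - b^2*c1*(c0*c2+N)))*u1*r.
Proof. intros Ho Hu Hr N D.
  assert (EN : (c1*u)^2+(c2*u1)^2 = N) by (unfold N; rewrite <- Hu; ring).
  rewrite EN.
  replace (a^2*((-c0*c1*u - o*c2*u1*r) - N*u)^2 + b^2*((-c0*c2*u1 + o*c1*u*r) - N*u1)^2) with
   (a^2*(u^2*(c0*c1+N)^2 + 2*o*c2*u*u1*r*(c0*c1+N) + o^2*c2^2*u1^2*r^2) +
    b^2*(u1^2*(c0*c2+N)^2 - 2*o*c1*u*u1*r*(c0*c2+N) + o^2*c1^2*u^2*r^2)) by ring.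
  rewrite Ho, Hu, Hr. unfold D, N. ring.
Qed.


Lemma fin3' a b c0 c1 c2 u u1 r o X Y : o^2=1 -> u1^2=1-u^2 -> r^2 = (c1*u)^2+(c2*u1)^2 - c0^2 ->
 ((c1*u)^2+(c2*u1)^2)*X = -c0*c1*u - o*c2*u1*r -> ((c1*u)^2+(c2*u1)^2)*Y = -c0*c2*u1 + o*c1*u*r ->
 (c1^2*u^2+c2^2*(1-u^2))^2 * ((a*X - a*u)^2 + (b*Y - b*u1)^2) =
 (a^2*(u^2*(c0*c1+(c1^2*u^2+c2^2*(1-u^2)))^2 + c2^2*(1-u^2)*((c1^2*u^2+c2^2*(1-u^2)) - c0^2))
   + b^2*((1-u^2)*(c0*c2+(c1^2*u^2+c2^2*(1-u^2)))^2 + c1^2*u^2*((c1^2*u^2+c2^2*(1-u^2)) - c0^2)))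
    + o*(2*u*(a^2*c2*(c0*c1+(c1^2*u^2+c2^2*(1-u^2))) - b^2*c1*(c0*c2+(c1^2*u^2+c2^2*(1-u^2)))))*u1*r.
Proof.
  intros Ho Hu Hr EX EY.
  assert (EN : c1^2*u^2+c2^2*(1-u^2) = (c1*u)^2+(c2*u1)^2) by (rewrite <- Hu; ring).
  transitivity (a^2*(((c1*u)^2+(c2*u1)^2)*X - ((c1*u)^2+(c2*u1)^2)*u)^2 + b^2*(((c1*u)^2+(c2*u1)^2)*Y - ((c1*u)^2+(c2*u1)^2)*u1)^2).
  { rewrite EN. ring. }
  rewrite EX, EY. apply (fin3 a b c0 c1 c2 u u1 r o Ho Hu). rewrite Hr, <- Hu. ring.
Qed.

Lemma fin1' a b c0 c1 c2 u u1 r o X2 Y2 X3 Y3 : o^2=1 -> u1^2=1-u^2 -> r^2 = (c1*u)^2+(c2*u1)^2 - c0^2 ->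
 ((c1*u)^2+(c2*u1)^2)*X2 = -c0*c1*u - o*c2*u1*r -> ((c1*u)^2+(c2*u1)^2)*Y2 = -c0*c2*u1 + o*c1*u*r ->
 ((c1*u)^2+(c2*u1)^2)*X3 = -c0*c1*u + o*c2*u1*r -> ((c1*u)^2+(c2*u1)^2)*Y3 = -c0*c2*u1 - o*c1*u*r ->
 (c1^2*u^2+c2^2*(1-u^2))^2 * ((a*X3 - a*X2)^2 + (b*Y3 - b*Y2)^2) =
 4*((c1^2*u^2+c2^2*(1-u^2)) - c0^2)*(a^2*c2^2*(1-u^2)+b^2*c1^2*u^2).
Proof.
  intros Ho Hu Hr EX2 EY2 EX3 EY3.
  assert (EN : c1^2*u^2+c2^2*(1-u^2) = (c1*u)^2+(c2*u1)^2) by (rewrite <- Hu; ring).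
  transitivity (a^2*(((c1*u)^2+(c2*u1)^2)*X3 - ((c1*u)^2+(c2*u1)^2)*X2)^2 + b^2*(((c1*u)^2+(c2*u1)^2)*Y3 - ((c1*u)^2+(c2*u1)^2)*Y2)^2).
  { rewrite EN. ring. }
  rewrite EX2, EY2, EX3, EY3.
  replace (a ^ 2 * (- c0 * c1 * u + o * c2 * u1 * r - (- c0 * c1 * u - o * c2 * u1 * r)) ^ 2 +
   b ^ 2 * (- c0 * c2 * u1 - o * c1 * u * r - (- c0 * c2 * u1 + o * c1 * u * r)) ^ 2)
   with (4*o^2*r^2*(a^2*c2^2*u1^2 + b^2*c1^2*u^2)) by ring.
  assert (Hr2 : r^2 = c1^2*u^2+c2^2*(1-u^2) - c0^2) by (rewrite Hr, <- Hu; ring).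
  rewrite Ho, Hr2, Hu. ring.
Qed.


Lemma edist_sq p q : edist p q ^2 = (fst q - fst p)^2 + (snd q - snd p)^2.
Proof. unfold edist. rewrite pow2_sqrt; [ring|]. apply Rplus_le_le_0_compat; apply pow2_ge_0. Qed.

Lemma edist_sym p q : edist p q = edist q p.
Proof. unfold edist. f_equal. ring. Qed.

Lemma orient_rot p q s : orient p q s = orient q s p.
Proof. unfold orient. ring. Qed.

Lemma orient_dist px py qx qy sx sy : orient (px,py) (qx,qy) (sx,sy) <> 0 -> (qx-px)^2+(qy-py)^2>0.
Proof. unfold orient; cbn [fst snd]. intros Hor.
  destruct (Req_dec qx px); destruct (Req_dec qy py); first [nra | (exfalso; apply Hor; subst; ring)].
Qed.

Lemma chord a b X Y X' Y' : 0<a -> 0<b -> X^2+Y^2=1 -> X'^2+Y'^2=1 -> (a*X'-a*X)^2+(b*Y'-b*Y)^2>0 ->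
 let J := ((a*X)*(a*X')/a^2+(b*Y)*(b*Y')/b^2-1)/edist (a*X,b*Y) (a*X',b*Y') in
 0 < J^2 /\ cc0 a b (J^2) + cc1 a b (J^2)*(X*X') + cc2 a b (J^2)*(Y*Y') = 0.
Proof.
  intros Ha Hb C C' Hd J.
  set (d := edist (a*X,b*Y) (a*X',b*Y')) in *.
  assert (Hd2 : d^2 = (a*X'-a*X)^2+(b*Y'-b*Y)^2) by (unfold d; rewrite edist_sq; reflexivity).
  assert (Hdp : 0 < d) by (unfold d, edist; cbn [fst snd]; apply sqrt_lt_R0; lra).
  set (w := 1 - X*X' - Y*Y').
  set (Q := a^2*(1-X*X'+Y*Y') + b^2*(1+X*X'-Y*Y')).
  assert (HwQ : d^2 = w*Q).
  { rewrite Hd2.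
    replace (w*Q) with (a^2*(X'^2+X^2-2*X*X') + b^2*(Y'^2+Y^2-2*Y*Y') + a^2*((1-X^2)*(1-X'^2) - Y^2*Y'^2) + b^2*((1-Y^2)*(1-Y'^2) - X^2*X'^2)) by (unfold w,Q; ring).
    replace (1-X^2) with (Y^2) by lra. replace (1-X'^2) with (Y'^2) by lra.
    replace (1-Y^2) with (X^2) by lra. replace (1-Y'^2) with (X'^2) by lra. ring. }
  assert (HJ : J = -w/d) by (unfold J, w; field; lra).
  assert (Hw : w <> 0) by (intro E; rewrite E in HwQ; nra).
  assert (HJ2 : J^2 * d^2 = w^2) by (rewrite HJ; field; lra).
  split.
  - rewrite HJ. replace ((-w/d)^2) with (w^2/d^2) by (field; lra).
    pose proof (Rlt_0_sqr w Hw). unfold Rsqr in *.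
    apply Rdiv_lt_0_compat; nra.
  - assert (HM : J^2*Q = w).
    { rewrite HwQ in HJ2. assert (w*(J^2*Q - w) = 0) by nra.
      apply Rmult_integral in H. destruct H; [contradiction|lra]. }
    replace (cc0 a b (J^2) + cc1 a b (J^2)*(X*X') + cc2 a b (J^2)*(Y*Y')) with (J^2*Q - w) by (unfold w, Q, cc0, cc1, cc2; ring).
    rewrite HM. ring.
Qed.


Lemma Jsym a b px py qx qy : (px*qx/a^2+py*qy/b^2-1)/edist (px,py) (qx,qy) = (qx*px/a^2+qy*py/b^2-1)/edist (qx,qy) (px,py).
Proof. rewrite edist_sym. replace (qx*px) with (px*qx) by ring. replace (qy*py) with (py*qy) by ring. reflexivity. Qed.

Lemma k2_pos a b : 0 < b -> b < a -> 0 < k2 a b.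
Proof. intros. unfold k2, cc2. pose proof (m0_pos a b H H0). assert (0 < m0 a b*(a^2-b^2)) by (apply Rmult_lt_0_compat; nra). lra. Qed.

Theorem lemma6 (a b : R) (Hb : 0 < b) (Hab : b < a)
  (o : R) (Ho : o = 1 \/ o = -1) :
  exists (h0 h1 h2 h3 : list R) (eps : R),
    (eps = 1 \/ eps = -1) /\
    (exists x : R, peval h1 x <> 0) /\
    forall u : R, -1 < u < 1 ->
    forall P2 P3 : pt,
      three_periodic a b (P1_of a b u) P2 P3 ->
      0 < o * orient (P1_of a b u) P2 P3 ->
      let u1 := sqrt (1 - u^2) in
      let u2 := sqrt (1 - rho1 a b * u^2) in
      let s1 := edist P2 P3 in
      let s2 := edist P3 (P1_of a b u) in
      let s3 := edist (P1_of a b u) P2 in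
      peval h1 u * s1^2 = peval h0 u /\
      peval h1 u * s2^2 = peval h3 u - eps * peval h2 u * u1 * u2 /\
      peval h1 u * s3^2 = peval h3 u + eps * peval h2 u * u1 * u2.
Proof.
  assert (Ha : 0 < a) by lra.
  pose proof (k2_pos a b Hb Hab) as Hk2.
  exists (Ph0 a b), (Ph1 a b), (Ph2 a b), (Ph3 a b), o.
  split; [exact Ho|]. split.
  { exists 0. rewrite ev_Ph1. replace ((k1 a b ^ 2 * 0 ^ 2 + k2 a b ^ 2 * (1 - 0 ^ 2)) ^ 2) with (k2 a b^4) by ring.
    apply pow_nonzero. lra. }
  assert (Ho2 : o^2 = 1) by (destruct Ho; subst; ring).
  intros u Hu P2 P3 H3 Hor. cbv zeta.
  destruct P2 as [x2 y2], P3 as [x3 y3].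
  unfold P1_of in *.
  set (u1 := sqrt (1-u^2)) in *.
  assert (Hu1s : u1^2 = 1-u^2) by (unfold u1; rewrite pow2_sqrt; nra).
  assert (Hu1 : 0 < u1) by (unfold u1; apply sqrt_lt_R0; nra).
  assert (exists X, x2 = a*X) as [X2 ->] by (exists (x2/a); field; lra).
  assert (exists X, x3 = a*X) as [X3 ->] by (exists (x3/a); field; lra).
  assert (exists X, y2 = b*X) as [Y2 ->] by (exists (y2/b); field; lra).
  assert (exists X, y3 = b*X) as [Y3 ->] by (exists (y3/b); field; lra).
  destruct H3 as (E1 & E2 & E3 & O & N1 & N2 & N3).
  unfold on_ellipse in E1, E2, E3; cbn [fst snd] in E1, E2, E3.
  assert (C2 : X2^2+Y2^2 = 1) by (rewrite <- E2; field; lra).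
  assert (C3 : X3^2+Y3^2 = 1) by (rewrite <- E3; field; lra).
  assert (C1 : u^2+u1^2 = 1) by lra.
  pose proof (refl_lemma a b (a*u) (b*u1) (a*X2) (b*Y2) (a*X3) (b*Y3) Ha Hb E1 O N1) as Rf1.
  assert (O2 : orient (a*X2,b*Y2) (a*X3,b*Y3) (a*u,b*u1) <> 0) by (rewrite <- orient_rot; exact O).
  pose proof (refl_lemma a b (a*X2) (b*Y2) (a*X3) (b*Y3) (a*u) (b*u1) Ha Hb E2 O2 N2) as Rf2.
  pose proof (Jsym a b (a*X2) (b*Y2) (a*u) (b*u1)) as Js.
  assert (D12 : (a*X2-a*u)^2+(b*Y2-b*u1)^2>0) by (apply (orient_dist _ _ _ _ _ _ O)).
  assert (O3 : orient (a*u,b*u1) (a*X3,b*Y3) (a*X2,b*Y2) <> 0) by (unfold orient in *; cbn [fst snd] in *; lra).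
  assert (D13 : (a*X3-a*u)^2+(b*Y3-b*u1)^2>0) by (apply (orient_dist _ _ _ _ _ _ O3)).
  assert (D23 : (a*X3-a*X2)^2+(b*Y3-b*Y2)^2>0) by (apply (orient_dist _ _ _ _ _ _ O2)).
  pose proof (chord a b u u1 X2 Y2 Ha Hb C1 C2 D12) as Ch12.
  pose proof (chord a b u u1 X3 Y3 Ha Hb C1 C3 D13) as Ch13.
  pose proof (chord a b X2 Y2 X3 Y3 Ha Hb C2 C3 D23) as Ch23.
  cbv zeta in Ch12, Ch13, Ch23.
  rewrite <- Rf1 in Ch13. rewrite Rf2, Js in Ch23.
  set (J := (a * u * (a * X2) / a ^ 2 + b * u1 * (b * Y2) / b ^ 2 - 1) / edist (a * u, b * u1) (a * X2, b * Y2)) in *.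
  destruct Ch12 as [Hm R12]. destruct Ch13 as [_ R13]. destruct Ch23 as [_ R23].
  assert (D23' : (X3-X2)^2+(Y3-Y2)^2>0).
  { destruct (Req_dec X3 X2); destruct (Req_dec Y3 Y2); first [nra | (subst; nra)]. }
  pose proof (core1 a b u u1 X2 Y2 X3 Y3 (J^2) Hb Hab Hu1 Hu1s C2 C3 Hm R12 R13 R23 D23') as [HP [HS HPr]].
  pose proof (m_eq a b (J^2) Hb Hab Hm HP) as Hm0.
  assert (Hcross : 0 < o*((X2-u)*(Y3-u1) - (Y2-u1)*(X3-u))).
  { replace (o * orient (a*u, b*u1) (a*X2,b*Y2) (a*X3,b*Y3)) with ((a*b)*(o*((X2-u)*(Y3-u1) - (Y2-u1)*(X3-u)))) in Hor
      by (unfold orient; cbn [fst snd]; ring).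
    assert (0 < a*b) by nra. nra. }
  pose proof (core2 a b u u1 X2 Y2 X3 Y3 (J^2) o Hb Hab Hu1 Hu1s Hm Ho2 R12 R13 HS HPr Hcross) as [HD [EX2 [EX3 [EY2 EY3]]]].
  rewrite Hm0 in HD, EX2, EX3, EY2, EY3.
  change (cc0 a b (m0 a b)) with (k0 a b) in *.
  change (cc1 a b (m0 a b)) with (k1 a b) in *.
  change (cc2 a b (m0 a b)) with (k2 a b) in *.
  set (r := sqrt ((k1 a b * u) ^ 2 + (k2 a b * u1) ^ 2 - k0 a b ^ 2)) in *.
  assert (Hr2 : r^2 = (k1 a b * u) ^ 2 + (k2 a b * u1) ^ 2 - k0 a b ^ 2) by (unfold r; rewrite pow2_sqrt; lra).
  assert (Hr : r = Kc a b * sqrt (1 - rho1 a b * u^2)).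
  { unfold r, Kc. rewrite <- sqrt_mult_alt by (pose proof (K2_pos a b Hb Hab); lra).
    f_equal. rewrite Rmult_minus_distr_l, Rmult_1_r.
    replace ((k2 a b ^ 2 - k0 a b ^ 2) * (rho1 a b * u ^ 2)) with ((rho1 a b * (k2 a b ^ 2 - k0 a b ^ 2)) * u^2) by ring.
    rewrite rho_id by assumption. replace ((k2 a b * u1)^2) with (k2 a b^2 * u1^2) by ring. rewrite Hu1s. ring. }
  assert (Ho2' : (-o)^2 = 1) by (rewrite <- Ho2; ring).
  split; [|split].
  - rewrite ev_Ph1, ev_Ph0, edist_sq. cbn [fst snd].
    apply (fin1' a b (k0 a b) (k1 a b) (k2 a b) u u1 r o X2 Y2 X3 Y3); assumption.
  - rewrite ev_Ph1, ev_Ph3, ev_Ph2, edist_sq. cbn [fst snd].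
    replace ((a*u - a*X3)^2 + (b*u1 - b*Y3)^2) with ((a*X3-a*u)^2+(b*Y3-b*u1)^2) by ring.
    rewrite (fin3' a b (k0 a b) (k1 a b) (k2 a b) u u1 r (-o) X3 Y3 Ho2' Hu1s Hr2).
    + rewrite Hr. ring.
    + rewrite EX3. ring.
    + rewrite EY3. ring.
  - rewrite ev_Ph1, ev_Ph3, ev_Ph2, edist_sq. cbn [fst snd].
    rewrite (fin3' a b (k0 a b) (k1 a b) (k2 a b) u u1 r o X2 Y2 Ho2 Hu1s Hr2 EX2 EY2).
    rewrite Hr. ring.
Qed.
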